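(* Let $\mathcal{A}$, $H(\mathcal{A})$, $H(\mathcal{A}^* )$ be as in the context, and let $a,b'$ be non-negative integers. Define $$S=\sum_\alpha(-1)^{|\alpha|}e_\alpha\otimes e^\alpha\in H(\mathcal{A})^{\otimes2},\quad \tilde S=\sum_\alpha\tilde e_\alpha\otimes\tilde e^\alpha\in H(\mathcal{A}^* )^{\otimes2},$$ $$S'=\sum_\alpha(-1)^{(a+b'+1)|\alpha|}\tilde e_\alpha\otimes e^\alpha\in H(\mathcal{A}^* )\otimes H(\mathcal{A}),\quad S''=\sum_\alpha(-1)^{(a+b')|\alpha|}e_\alpha\otimes\tilde e^\alpha\in H(\mathcal{A})\otimes H(\mathcal{A}^* ).$$ Then, with leg-numbering notation $X_{ij}$ placing the two tensor factors of $X$ in positions $i,j$ of a triple tensor product (with the appropriate algebra $H(\mathcal{A})$ or $H(\mathcal{A}^* )$ in each position) and $1$ elsewhere, the following hold: $$S'_{12}S'_{13}S_{23}=S_{23}S'_{12},\qquad \tilde S_{12}S'_{23}=S'_{23}S'_{13}\tilde S_{12},$$ $$S_{12}S''_{13}S''_{23}=S''_{23}S_{12},\qquad S''_{12}\tilde S_{23}=\tilde S_{23}S''_{13}S''_{12},$$ $$S'_{12}\tilde S_{13}S''_{23}=S''_{23}S'_{12},\qquad S''_{12}S'_{23}=S'_{23}S_{13}S''_{12}.$$ Moreover $\tilde S$ satisfies $\tilde S_{12}\tilde S_{23}=\tilde S_{23}\tilde S_{13}\tilde S_{12}$.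
   Context: Graded tensor products: $(a_1\otimes b_1)(a_2\otimes b_2)=(-1)^{|b_1||a_2|}a_1a_2\otimes b_1b_2$. $\mathcal{A}$ is a $\mathbb{Z}_2$-graded Hopf algebra over $\mathbb{C}$ with homogeneous basis $e_\alpha$ of degree $|\alpha|$, $e_\alpha e_\beta=\sum_\gamma m^\gamma_{\alpha\beta}e_\gamma$, $\Delta(e_\alpha)=\sum\mu^{\beta\gamma}_\alpha e_\beta\otimes e_\gamma$; $\mathcal{A}^*$ is the dual Hopf algebra with dual basis $e^\alpha$. The Heisenberg double $H(\mathcal{A})$ is spanned by $e^\alpha\otimes e_\beta$ with product $(e^\alpha\otimes e_\beta)(e^\gamma\otimes e_\delta)=\sum(-1)^{|\beta||\gamma|+|\pi||\epsilon|+|\pi||\alpha|+|\epsilon|}m^\gamma_{\pi\epsilon}m^\tau_{\rho\delta}\mu^{\epsilon\rho}_\beta\mu^{\alpha\pi}_\sigma e^\sigma\otimes e_\tau$; write $e_\alpha=1\otimes e_\alpha$, $e^\alpha=e^\alpha\otimes1$. The Heisenberg double $H(\mathcal{A}^* )$ is spanned by $\tilde e_\alpha\otimes\tilde e^\beta$ with product $(\tilde e_\alpha\otimes\tilde e^\beta)(\tilde e_\gamma\otimes\tilde e^\delta)=\sum(-1)^{|\rho||\pi|+|\rho||\epsilon|+|\pi||\delta|}\mu^{\rho\epsilon}_\gamma\mu^{\pi\delta}_\tau m^\beta_{\epsilon\pi}m^\sigma_{\alpha\rho}\tilde e_\sigma\otimes\tilde e^\tau$; write $\tilde e_\alpha=\tilde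 e_\alpha\otimes1$, $\tilde e^\alpha=1\otimes\tilde e^\alpha$, of degree $|\alpha|$. In the six identities, the positions carry: first identity $H(\mathcal{A}^* ),H(\mathcal{A}),H(\mathcal{A})$; second $H(\mathcal{A}^* ),H(\mathcal{A}^* ),H(\mathcal{A})$; third $H(\mathcal{A}),H(\mathcal{A}),H(\mathcal{A}^* )$; fourth $H(\mathcal{A}),H(\mathcal{A}^* ),H(\mathcal{A}^* )$; fifth $H(\mathcal{A}^* ),H(\mathcal{A}),H(\mathcal{A}^* )$; sixth $H(\mathcal{A}),H(\mathcal{A}^* ),H(\mathcal{A})$. *)

(* Defs.v *)
From HB Require Import structures.
From mathcomp Require Import all_boot all_order all_algebra.
Set Implicit Arguments. Unset Strict Implicit. Unset Printing Implicit Defensive.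
Import Order.TTheory GRing.Theory Num.Theory.
Local Open Scope ring_scope.

(* Data of a finite-dimensional Z2-graded algebra/coalgebra A with homogeneous
   basis e_a (a : hI), given by structure constants:
     hdeg a     = |a| (true = odd)
     hm a b c   = m^c_{ab}      (e_a e_b = sum_c m^c_{ab} e_c)
     hmu a b c  = mu^{bc}_a     (Delta e_a = sum_{b,c} mu^{bc}_a e_b (x) e_c)
     hu a       = coefficient of e_a in the unit 1_A
     heps a     = eps(e_a), the counit (= the unit 1_{A_dual} = sum_a eps(e_a) e^a) *)
Record hopf_data (C : comNzRingType) := HopfData {
  hI : finType;
  hdeg : hI -> bool;
  hm : hI -> hI -> hI -> C;
  hmu : hI -> hI -> hI -> C;
  hu : hI -> C;
  heps : hI -> C
}.

Section HopfDefs.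
Variable C : comNzRingType.
Variable A : hopf_data C.
Local Notation I := (hI A).
Local Notation deg := (@hdeg _ A).
Local Notation m := (@hm _ A).
Local Notation mu := (@hmu _ A).
Local Notation u := (@hu _ A).
Local Notation eps := (@heps _ A).

Definition sgn (b : bool) : C := if b then -1 else 1.
Definition kdelta (x y : I) : C := (x == y)%:R.

Definition homogeneous_structure : Prop :=
  [/\ (forall a b c, m a b c != 0 -> deg c = deg a (+) deg b),
      (forall a b c, mu a b c != 0 -> deg a = deg b (+) deg c),
      (forall a, u a != 0 -> deg a = false) &
      (forall a, eps a != 0 -> deg a = false)].

Definition mul_assoc : Prop := forall a b c x,
  \sum_(d : I) m a b d * m d c x = \sum_(d : I) m b c d * m a d x.

Definition mul_unit : Prop := forall b c,
  \sum_(a : I) u a * m a b c = kdelta b c /\ \sum_(a : I) u a * m b a c = kdelta b c.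

Definition comul_coassoc : Prop := forall a x y c,
  \sum_(d : I) mu a d c * mu d x y = \sum_(d : I) mu a x d * mu d y c.

Definition comul_counit : Prop := forall a c,
  \sum_(b : I) eps b * mu a b c = kdelta a c /\ \sum_(b : I) eps b * mu a c b = kdelta a c.

(* Delta(e_a e_b) = Delta(e_a) Delta(e_b) in the graded tensor product A (x) A *)
Definition comul_multiplicative : Prop := forall a b x y,
  \sum_(c : I) m a b c * mu c x y =
  \sum_(a1 : I) \sum_(a2 : I) \sum_(b1 : I) \sum_(b2 : I)
     sgn (deg a2 && deg b1) * mu a a1 a2 * mu b b1 b2 * m a1 b1 x * m a2 b2 y.

Definition comul_unital : Prop := forall x y,
  \sum_(a : I) u a * mu a x y = u x * u y.

Definition counit_multiplicative : Prop :=
  (forall a b, \sum_(c : I) m a b c * eps c = eps a * eps b) /\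
  \sum_(a : I) u a * eps a = 1.

(* antipode S(e_b) = sum_d s b d e_d *)
Definition has_antipode : Prop := exists s : I -> I -> C, forall a x,
  \sum_(b : I) \sum_(c : I) mu a b c * (\sum_(d : I) s b d * m d c x) = eps a * u x /\
  \sum_(b : I) \sum_(c : I) mu a b c * (\sum_(d : I) s c d * m b d x) = eps a * u x.

Definition is_graded_hopf : Prop :=
  [/\ homogeneous_structure, mul_assoc, mul_unit, comul_coassoc &
      [/\ comul_counit, comul_multiplicative, comul_unital,
      counit_multiplicative & has_antipode]].

(* Both H(A) and H(A_dual) have basis indexed by pairs (s,t) : I * I:
   H(A):   e^s (x) e_t ;   H(A_dual):  ~e_s (x) ~e^t ; degree |s|+|t|. *)
Definition J := (I * I)%type.
Definition degJ (k : J) : bool := deg k.1 (+) deg k.2.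

(* Structure constants: coefficient of basis element z in x * y. *)
(* (e^al (x) e_be)(e^ga (x) e_de) = sum (-1)^{|be||ga|+|pi||ep|+|pi||al|+|ep|}
     m^ga_{pi ep} m^tau_{rho de} mu^{ep rho}_be mu^{al pi}_sig e^sig (x) e_tau *)
Definition PH (x y z : J) : C :=
  \sum_(p : I) \sum_(e : I) \sum_(r : I)
    sgn ((deg x.2 && deg y.1) (+) (deg p && deg e) (+) (deg p && deg x.1) (+) deg e)
    * m p e y.1 * m r y.2 z.2 * mu x.2 e r * mu z.1 x.1 p.

(* (~e_al (x) ~e^be)(~e_ga (x) ~e^de) = sum (-1)^{|rho||pi|+|rho||ep|+|pi||de|}
     mu^{rho ep}_ga mu^{pi de}_tau m^be_{ep pi} m^sig_{al rho} ~e_sig (x) ~e^tau *)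
Definition PHt (x y z : J) : C :=
  \sum_(r : I) \sum_(e : I) \sum_(p : I)
    sgn ((deg r && deg p) (+) (deg r && deg e) (+) (deg p && deg y.2))
    * mu y.1 r e * mu z.2 p y.2 * m e p x.2 * m x.1 r z.1.

(* elements of H(A) / H(A_dual) as coefficient vectors on J *)
Definition oneH (k : J) : C := eps k.1 * u k.2.          (* 1 (x) 1 in H(A) *)
Definition oneHt (k : J) : C := u k.1 * eps k.2.         (* 1 (x) 1 in H(A_dual) *)
Definition eH_lo (al : I) (k : J) : C := eps k.1 * kdelta k.2 al.  (* e_al = 1 (x) e_al *)
Definition eH_up (al : I) (k : J) : C := kdelta k.1 al * u k.2.    (* e^al = e^al (x) 1 *)
Definition eHt_lo (al : I) (k : J) : C := kdelta k.1 al * eps k.2. (* ~e_al = ~e_al (x) 1 *)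
Definition eHt_up (al : I) (k : J) : C := u k.1 * kdelta k.2 al.   (* ~e^al = 1 (x) ~e^al *)

Definition S_H (k1 k2 : J) : C :=
  \sum_(al : I) sgn (deg al) * eH_lo al k1 * eH_up al k2.
Definition S_t (k1 k2 : J) : C :=
  \sum_(al : I) eHt_lo al k1 * eHt_up al k2.
Definition S_p (a b' : nat) (k1 k2 : J) : C :=
  \sum_(al : I) sgn (odd (a + b' + 1) && deg al) * eHt_lo al k1 * eH_up al k2.
Definition S_pp (a b' : nat) (k1 k2 : J) : C :=
  \sum_(al : I) sgn (odd (a + b') && deg al) * eH_lo al k1 * eHt_up al k2.

(* triple graded tensor product of algebras with structure constants P1 P2 P3 *)
Definition mul3 (P1 P2 P3 : J -> J -> J -> C) (x y : J -> J -> J -> C) :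
    J -> J -> J -> C :=
  fun k1 k2 k3 =>
  \sum_(i1 : J) \sum_(i2 : J) \sum_(i3 : J) \sum_(j1 : J) \sum_(j2 : J) \sum_(j3 : J)
    sgn ((degJ i2 && degJ j1) (+) (degJ i3 && degJ j1) (+) (degJ i3 && degJ j2))
    * x i1 i2 i3 * y j1 j2 j3 * P1 i1 j1 k1 * P2 i2 j2 k2 * P3 i3 j3 k3.

Definition leg12 (one3 : J -> C) (X : J -> J -> C) : J -> J -> J -> C :=
  fun k1 k2 k3 => X k1 k2 * one3 k3.
Definition leg13 (one2 : J -> C) (X : J -> J -> C) : J -> J -> J -> C :=
  fun k1 k2 k3 => X k1 k3 * one2 k2.
Definition leg23 (one1 : J -> C) (X : J -> J -> C) : J -> J -> J -> C :=
  fun k1 k2 k3 => one1 k1 * X k2 k3.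

End HopfDefs.

(* Main.v *)
Require Import Defs.
From HB Require Import structures.
From mathcomp Require Import all_boot all_order all_algebra complex.
From mathcomp Require Import reals.
From Stdlib Require Import FunctionalExtensionality.
From mathcomp Require Import ring.
Set Implicit Arguments. Unset Strict Implicit. Unset Printing Implicit Defensive.
Import GRing.Theory Num.Theory.
Local Open Scope ring_scope.

Section Gen.
Variable C : comNzRingType.
Variable A : hopf_data C.
Local Notation I := (hI A).
Local Notation JJ := (J A).
Local Notation deg := (@hdeg _ A).
Local Notation dJ := (@degJ _ A).

Lemma sgnD b1 b2 : sgn C b1 * sgn C b2 = sgn C (b1 (+) b2).
Proof. by case: b1; case: b2; rewrite /sgn /= ?mulrN ?mulNr ?opprK ?mulr1. Qed.

Lemma sumJ (F : JJ -> C) : \sum_(x : JJ) F x = \sum_(a : I) \sum_(b : I) F (a, b).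
Proof. by rewrite pair_bigA; apply: eq_bigr => -[]. Qed.

Lemma sum_kd (F : I -> C) a : \sum_(x : I) kdelta x a * F x = F a.
Proof.
rewrite (bigD1 a) //= big1 ?addr0 /kdelta ?eqxx ?mul1r // => x /negPf ->.
by rewrite mul0r.
Qed.

Lemma sum_neq0 (K : finType) (F : K -> C) : \sum_(x : K) F x != 0 -> exists x, F x != 0.
Proof.
move=> H; case: (pickP (fun x => F x != 0)) => [x Hx|H0]; first by exists x.
by move: H; rewrite big1 ?eqxx // => x _; move: (H0 x) => /negbFE/eqP.
Qed.

Lemma mul_neq0l (x y : C) : x * y != 0 -> x != 0.
Proof. by apply: contra => /eqP ->; rewrite mul0r. Qed.
Lemma mul_neq0r (x y : C) : x * y != 0 -> y != 0.
Proof. by apply: contra => /eqP ->; rewrite mulr0. Qed.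

Definition mulP (P : JJ -> JJ -> JJ -> C) (v w : JJ -> C) : JJ -> C :=
  fun z => \sum_(x : JJ) \sum_(y : JJ) v x * w y * P x y z.

Definition homog (d : bool) (f : JJ -> C) := forall k, f k != 0 -> dJ k = d.

Definition graded (P : JJ -> JJ -> JJ -> C) :=
  forall x y z, P x y z != 0 -> dJ z = dJ x (+) dJ y.

Lemma homog_mulP P d e v w : graded P -> homog d v -> homog e w ->
  homog (d (+) e) (mulP P v w).
Proof.
move=> gP hv hw z /sum_neq0 [x /sum_neq0 [y H]].
have H1 := mul_neq0l (mul_neq0l H); have H2 := mul_neq0r (mul_neq0l H).
have H3 := mul_neq0r H.
by rewrite (gP _ _ _ H3) (hv _ H1) (hw _ H2).
Qed.

Definition t3 (f g h : JJ -> C) : JJ -> JJ -> JJ -> C :=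
  fun k1 k2 k3 => f k1 * g k2 * h k3.

Definition fam (K : finType) (c : K -> C) (f g h : K -> JJ -> C) :
   JJ -> JJ -> JJ -> C :=
  fun k1 k2 k3 => \sum_(x : K) c x * t3 (f x) (g x) (h x) k1 k2 k3.

Lemma homog_sgn d f k (F : bool -> C) : homog d f -> f k * F (dJ k) = f k * F d.
Proof.
move=> hf; have [->|/hf ->] := eqVneq (f k) 0; by rewrite ?mul0r.
Qed.

Lemma sum2_distrl (F : JJ -> JJ -> C) X :
  (\sum_i \sum_j F i j) * X = \sum_i \sum_j F i j * X.
Proof. by rewrite big_distrl; apply: eq_bigr => i _; rewrite big_distrl. Qed.
Lemma sum2_distrr (F : JJ -> JJ -> C) X :
  X * (\sum_i \sum_j F i j) = \sum_i \sum_j X * F i j.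
Proof. by rewrite big_distrr; apply: eq_bigr => i _; rewrite big_distrr. Qed.

Lemma sum6 (a b c : JJ -> JJ -> C) s :
  s * ((\sum_i \sum_j a i j) * (\sum_i \sum_j b i j) * (\sum_i \sum_j c i j)) =
  \sum_i1 \sum_j1 \sum_i2 \sum_j2 \sum_i3 \sum_j3 s * a i1 j1 * b i2 j2 * c i3 j3.
Proof.
rewrite (sum2_distrl a) (sum2_distrl (fun i j => a i j * _)) sum2_distrr.
apply: eq_bigr => i1 _; apply: eq_bigr => j1 _.
rewrite !mulrA (sum2_distrr b) (sum2_distrl (fun i j => _ * b i j)).
apply: eq_bigr => i2 _; apply: eq_bigr => j2 _.
by rewrite (sum2_distrr c).
Qed.

Section M3.
Variables P1 P2 P3 : JJ -> JJ -> JJ -> C.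

Lemma mul3_t3 f g h f' g' h' d2 d3 e1 e2 :
  homog d2 g -> homog d3 h -> homog e1 f' -> homog e2 g' ->
  mul3 P1 P2 P3 (t3 f g h) (t3 f' g' h') =
  fun k1 k2 k3 => sgn C ((d2 && e1) (+) (d3 && e1) (+) (d3 && e2)) *
     (mulP P1 f f' k1 * mulP P2 g g' k2 * mulP P3 h h' k3).
Proof.
move=> hg hh hf' hg'.
apply: functional_extensionality => k1; apply: functional_extensionality => k2.
apply: functional_extensionality => k3.
rewrite /mul3 /mulP /t3.
under eq_bigr => i1 _ do under eq_bigr => i2 _ do rewrite exchange_big /=.
under eq_bigr => i1 _ do rewrite exchange_big /=.
under eq_bigr => i1 _ do under eq_bigr => j1 _ do under eq_bigr => i2 _ do rewrite exchange_big /=.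
rewrite sum6.
apply: eq_bigr => i1 _; apply: eq_bigr => j1 _; apply: eq_bigr => i2 _.
apply: eq_bigr => j2 _; apply: eq_bigr => i3 _; apply: eq_bigr => j3 _.
transitivity (sgn C ((dJ i2 && dJ j1) (+) (dJ i3 && dJ j1) (+) (dJ i3 && dJ j2)) *
   (f i1 * f' j1 * g i2 * g' j2 * h i3 * h' j3) * (P1 i1 j1 k1 * P2 i2 j2 k2 * P3 i3 j3 k3)).
  by ring.
transitivity (sgn C ((d2 && e1) (+) (d3 && e1) (+) (d3 && e2)) *
   (f i1 * f' j1 * g i2 * g' j2 * h i3 * h' j3) * (P1 i1 j1 k1 * P2 i2 j2 k2 * P3 i3 j3 k3)); last first.
  by ring.
congr (_ * _).
have [->|/hg E2] := eqVneq (g i2) 0; first by rewrite !(mulr0, mul0r).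
have [->|/hh E3] := eqVneq (h i3) 0; first by rewrite !(mulr0, mul0r).
have [->|/hf' E4] := eqVneq (f' j1) 0; first by rewrite !(mulr0, mul0r).
have [->|/hg' E5] := eqVneq (g' j2) 0; first by rewrite !(mulr0, mul0r).
by rewrite E2 E3 E4 E5.
Qed.

Lemma pull6 (K : finType) (F : JJ -> JJ -> JJ -> JJ -> JJ -> JJ -> K -> C) :
  \sum_i1 \sum_i2 \sum_i3 \sum_j1 \sum_j2 \sum_j3 \sum_(x : K) F i1 i2 i3 j1 j2 j3 x =
  \sum_(x : K) \sum_i1 \sum_i2 \sum_i3 \sum_j1 \sum_j2 \sum_j3 F i1 i2 i3 j1 j2 j3 x.
Proof.
under eq_bigr => i1 _ do under eq_bigr => i2 _ do under eq_bigr => i3 _ do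
  under eq_bigr => j1 _ do under eq_bigr => j2 _ do rewrite exchange_big.
under eq_bigr => i1 _ do under eq_bigr => i2 _ do under eq_bigr => i3 _ do
  under eq_bigr => j1 _ do rewrite exchange_big.
under eq_bigr => i1 _ do under eq_bigr => i2 _ do under eq_bigr => i3 _ do
  rewrite exchange_big.
under eq_bigr => i1 _ do under eq_bigr => i2 _ do rewrite exchange_big.
under eq_bigr => i1 _ do rewrite exchange_big.
by rewrite exchange_big.
Qed.

Lemma scale6 (F : JJ -> JJ -> JJ -> JJ -> JJ -> JJ -> C) c :
  c * (\sum_i1 \sum_i2 \sum_i3 \sum_j1 \sum_j2 \sum_j3 F i1 i2 i3 j1 j2 j3) =
  \sum_i1 \sum_i2 \sum_i3 \sum_j1 \sum_j2 \sum_j3 c * F i1 i2 i3 j1 j2 j3.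
Proof.
rewrite big_distrr; apply: eq_bigr => i1 _; rewrite big_distrr; apply: eq_bigr => i2 _.
rewrite big_distrr; apply: eq_bigr => i3 _; rewrite big_distrr; apply: eq_bigr => j1 _.
rewrite big_distrr; apply: eq_bigr => j2 _; rewrite big_distrr //.
Qed.

Lemma term2 (K1 K2 : finType) (X : K1 -> C) (Y : K2 -> C) s a b c :
  s * (\sum_x X x) * (\sum_y Y y) * a * b * c =
  \sum_(p : K1 * K2) s * X p.1 * Y p.2 * a * b * c.
Proof.
rewrite -(pair_bigA _ (fun x y => s * X x * Y y * a * b * c)) /=.
have -> : s * (\sum_x X x) * (\sum_y Y y) * a * b * c =
   (\sum_x X x) * ((\sum_y Y y) * (s * a * b * c)) by ring.
rewrite big_distrl; apply: eq_bigr => x _ /=; rewrite big_distrl big_distrr.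
by apply: eq_bigr => y _ /=; ring.
Qed.

Lemma mul3_fam (K1 K2 : finType) (c : K1 -> C) f g h (c' : K2 -> C) f' g' h'
    dg dh df' dg' :
  (forall x, homog (dg x) (g x)) -> (forall x, homog (dh x) (h x)) ->
  (forall y, homog (df' y) (f' y)) -> (forall y, homog (dg' y) (g' y)) ->
  mul3 P1 P2 P3 (fam c f g h) (fam c' f' g' h') =
  fam (fun p : K1 * K2 => c p.1 * c' p.2 *
         sgn C ((dg p.1 && df' p.2) (+) (dh p.1 && df' p.2) (+) (dh p.1 && dg' p.2)))
      (fun p => mulP P1 (f p.1) (f' p.2)) (fun p => mulP P2 (g p.1) (g' p.2))
      (fun p => mulP P3 (h p.1) (h' p.2)).
Proof.
move=> hg hh hf' hg'.
apply: functional_extensionality => k1; apply: functional_extensionality => k2.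
apply: functional_extensionality => k3.
transitivity (\sum_(p : K1 * K2) c p.1 * c' p.2 *
   mul3 P1 P2 P3 (t3 (f p.1) (g p.1) (h p.1)) (t3 (f' p.2) (g' p.2) (h' p.2)) k1 k2 k3);
  last first.
  rewrite /fam; apply: eq_bigr => p _.
  rewrite (mul3_t3 _ _ (hg p.1) (hh p.1) (hf' p.2) (hg' p.2)) /t3; ring.
rewrite /mul3 /fam.
under eq_bigr => i1 _ do under eq_bigr => i2 _ do under eq_bigr => i3 _ do
  under eq_bigr => j1 _ do under eq_bigr => j2 _ do under eq_bigr => j3 _ do
  rewrite term2.
rewrite pull6; apply: eq_bigr => p _; rewrite scale6.
do 6! (apply: eq_bigr => ? _); ring.
Qed.

End M3.
End Gen.

Section Hopf.
Variable C : comNzRingType.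
Variable A : hopf_data C.
Local Notation I := (hI A).
Local Notation JJ := (J A).
Local Notation deg := (@hdeg _ A).
Local Notation dJ := (@degJ _ A).
Local Notation m := (@hm _ A).
Local Notation mu := (@hmu _ A).
Local Notation u := (@hu _ A).
Local Notation eps := (@heps _ A).
Local Notation kd := (@kdelta _ A).
Local Notation sg := (@sgn C).
Local Notation mP := (@mulP C A).
Local Notation hom := (@homog C A).

Hypothesis hm_deg : forall a b c, m a b c != 0 -> deg c = deg a (+) deg b.
Hypothesis hmu_deg : forall a b c, mu a b c != 0 -> deg a = deg b (+) deg c.
Hypothesis hu_deg : forall a, u a != 0 -> deg a = false.
Hypothesis heps_deg : forall a, eps a != 0 -> deg a = false.
Hypothesis munitl : forall b c, \sum_(a : I) u a * m a b c = kd b c.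
Hypothesis munitr : forall b c, \sum_(a : I) u a * m b a c = kd b c.
Hypothesis counitl : forall a c, \sum_(b : I) eps b * mu a b c = kd a c.
Hypothesis counitr : forall a c, \sum_(b : I) eps b * mu a c b = kd a c.
Hypothesis unital : forall x y, \sum_(a : I) u a * mu a x y = u x * u y.
Hypothesis cmult : forall a b, \sum_(c : I) m a b c * eps c = eps a * eps b.
Hypothesis ueps : \sum_(a : I) u a * eps a = 1.

Lemma sgF : sg false = 1. Proof. by []. Qed.
Ltac bs := rewrite /= ?andbF ?andFb ?addbF ?addFb ?andbT ?andTb ?sgF ?mul1r.

Lemma kdC a b : kd a b = kd b a.
Proof. by rewrite /kdelta eq_sym. Qed.

Lemma sum_kdr (F : I -> C) a : \sum_(x : I) kd a x * F x = F a.
Proof. under eq_bigr do rewrite kdC. exact: sum_kd. Qed.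

Lemma sink3 (F : I -> I -> I -> I -> C) :
  \sum_x \sum_a \sum_b \sum_c F x a b c = \sum_a \sum_b \sum_c \sum_x F x a b c.
Proof.
rewrite exchange_big; apply: eq_bigr => a _; rewrite exchange_big.
by apply: eq_bigr => b _; rewrite exchange_big.
Qed.

Lemma scale3 (F : I -> I -> I -> C) c :
  c * (\sum_a \sum_b \sum_d F a b d) = \sum_a \sum_b \sum_d c * F a b d.
Proof.
rewrite big_distrr; apply: eq_bigr => a _; rewrite big_distrr; apply: eq_bigr => b _.
by rewrite big_distrr.
Qed.

Lemma sum_kdm (F : I -> C) a : \sum_(x : I) F x * kd x a = F a.
Proof. under eq_bigr do rewrite mulrC. exact: sum_kd. Qed.

Lemma PH_b x1 y z : \sum_(x2 : I) u x2 * PH (x1, x2) y z =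
  kd y.2 z.2 * (sg (deg y.1 && deg x1) * mu z.1 x1 y.1).
Proof.
rewrite /PH /=.
under eq_bigr => x2 _ do rewrite scale3.
rewrite sink3.
transitivity (\sum_p \sum_e \sum_r sg ((deg p && deg e) (+) (deg p && deg x1) (+) deg e)
   * m p e y.1 * m r y.2 z.2 * mu z.1 x1 p * (\sum_x2 u x2 * mu x2 e r)).
  apply: eq_bigr => p _; apply: eq_bigr => e _; apply: eq_bigr => r _.
  rewrite big_distrr; apply: eq_bigr => x2 _ /=.
  have [->|/hu_deg ->] := eqVneq (u x2) 0; first by rewrite !(mul0r, mulr0).
  by bs; ring.
under [LHS]eq_bigr => p _ do under eq_bigr => e _ do under eq_bigr => r _ do rewrite unital.
transitivity (\sum_p \sum_e sg (deg p && deg x1) * mu z.1 x1 p * (u e * m p e y.1)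
   * (\sum_r u r * m r y.2 z.2)).
  apply: eq_bigr => p _; apply: eq_bigr => e _.
  rewrite big_distrr; apply: eq_bigr => r _ /=.
  have [->|/hu_deg ->] := eqVneq (u e) 0; first by rewrite !(mul0r, mulr0).
  by bs; ring.
under eq_bigr => p _ do under eq_bigr => e _ do rewrite munitl.
transitivity (\sum_p sg (deg p && deg x1) * mu z.1 x1 p * kd y.2 z.2 *
   (\sum_e u e * m p e y.1)).
  apply: eq_bigr => p _; rewrite big_distrr; apply: eq_bigr => e _ /=; ring.
under eq_bigr => p _ do rewrite munitr.
by rewrite sum_kdm; ring.
Qed.
Ltac zc x := let H := fresh in
  have [H|/hu_deg H] := eqVneq (u x) 0; [by rewrite H !(mul0r, mulr0) | rewrite ?H].
Ltac ze x := let H := fresh in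
  have [H|/heps_deg H] := eqVneq (eps x) 0; [by rewrite H !(mul0r, mulr0) | rewrite ?H].

Lemma PH_a x2 y z : \sum_(x1 : I) eps x1 * PH (x1, x2) y z =
  \sum_e \sum_r sg ((deg x2 && deg y.1) (+) (deg z.1 && deg e) (+) deg e) *
     m z.1 e y.1 * m r y.2 z.2 * mu x2 e r.
Proof.
rewrite /PH /=.
under eq_bigr => x1 _ do rewrite scale3.
rewrite sink3.
transitivity (\sum_p \sum_e \sum_r
   sg ((deg x2 && deg y.1) (+) (deg p && deg e) (+) deg e) *
     m p e y.1 * m r y.2 z.2 * mu x2 e r * (\sum_x1 eps x1 * mu z.1 x1 p)).
  apply: eq_bigr => p _; apply: eq_bigr => e _; apply: eq_bigr => r _.
  rewrite big_distrr; apply: eq_bigr => x1 _ /=.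
  ze x1; by bs; ring.
under [LHS]eq_bigr => p _ do under eq_bigr => e _ do under eq_bigr => r _ do rewrite counitl.
transitivity (\sum_p kd z.1 p * \sum_e \sum_r
   sg ((deg x2 && deg y.1) (+) (deg p && deg e) (+) deg e) *
     m p e y.1 * m r y.2 z.2 * mu x2 e r).
  apply: eq_bigr => p _; rewrite big_distrr; apply: eq_bigr => e _.
  rewrite big_distrr; apply: eq_bigr => r _ /=; ring.
by rewrite sum_kdr.
Qed.

Lemma PH_c x y2 z : \sum_(y1 : I) eps y1 * PH x (y1, y2) z =
  kd z.1 x.1 * m x.2 y2 z.2.
Proof.
rewrite /PH /=.
under eq_bigr => y1 _ do rewrite scale3.
rewrite sink3.
transitivity (\sum_p \sum_e \sum_r
   sg ((deg p && deg e) (+) (deg p && deg x.1) (+) deg e) *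
     m r y2 z.2 * mu x.2 e r * mu z.1 x.1 p * (\sum_y1 m p e y1 * eps y1)).
  apply: eq_bigr => p _; apply: eq_bigr => e _; apply: eq_bigr => r _.
  rewrite big_distrr; apply: eq_bigr => y1 _ /=.
  ze y1; by bs; ring.
under eq_bigr => p _ do under eq_bigr => e _ do under eq_bigr => r _ do rewrite cmult.
transitivity (\sum_p (eps p * mu z.1 x.1 p) * \sum_r m r y2 z.2 * 
   \sum_e eps e * mu x.2 e r).
  apply: eq_bigr => p _; rewrite big_distrr exchange_big; apply: eq_bigr => r _.
  rewrite /= !big_distrr; apply: eq_bigr => e _ /=.
  ze p; ze e; by bs; ring.
under eq_bigr => p _ do under eq_bigr => r _ do rewrite counitl.
under eq_bigr => p _ do under eq_bigr => r _ do rewrite mulrC.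
under eq_bigr => p _ do rewrite sum_kdr.
rewrite -big_distrl /= counitr; ring.
Qed.

Lemma PHt_a x2 y z : \sum_(x1 : I) u x1 * PHt (x1, x2) y z =
  \sum_e \sum_p sg ((deg z.1 && deg p) (+) (deg z.1 && deg e) (+) (deg p && deg y.2)) *
     mu y.1 z.1 e * mu z.2 p y.2 * m e p x2.
Proof.
rewrite /PHt /=.
under eq_bigr => x1 _ do rewrite scale3.
rewrite sink3.
transitivity (\sum_r kd r z.1 * \sum_e \sum_p
   sg ((deg r && deg p) (+) (deg r && deg e) (+) (deg p && deg y.2)) *
     mu y.1 r e * mu z.2 p y.2 * m e p x2).
  apply: eq_bigr => r _; rewrite big_distrr; apply: eq_bigr => e _.
  rewrite big_distrr; apply: eq_bigr => p _ /=.
  rewrite -munitl big_distrl; apply: eq_bigr => x1 _ /=; ring.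
by rewrite sum_kd.
Qed.

Lemma PHt_b x1 y z : \sum_(x2 : I) eps x2 * PHt (x1, x2) y z =
  kd z.2 y.2 * m x1 y.1 z.1.
Proof.
rewrite /PHt /=.
under eq_bigr => x2 _ do rewrite scale3.
rewrite sink3.
transitivity (\sum_r m x1 r z.1 * \sum_e eps e * mu y.1 r e *
   \sum_p eps p * mu z.2 p y.2).
  apply: eq_bigr => r _; rewrite big_distrr; apply: eq_bigr => e _.
  rewrite /= !big_distrr; apply: eq_bigr => p _ /=.
  transitivity (sg ((deg r && deg p) (+) (deg r && deg e) (+) (deg p && deg y.2)) *
    mu y.1 r e * mu z.2 p y.2 * m x1 r z.1 * \sum_x2 m e p x2 * eps x2).
    rewrite big_distrr; by apply: eq_bigr => x2 _ /=; ring.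
  rewrite cmult; ze e; ze p; by bs; ring.
under eq_bigr => r _ do under eq_bigr => e _ do rewrite counitl.
under eq_bigr => r _ do rewrite -big_distrl /= counitr.
under eq_bigr => r _ do rewrite mulrC -mulrA.
by rewrite sum_kdr; ring.
Qed.

Lemma PHt_c x y2 z : \sum_(y1 : I) u y1 * PHt x (y1, y2) z =
  kd x.1 z.1 * (sg (deg x.2 && deg y2) * mu z.2 x.2 y2).
Proof.
rewrite /PHt /=.
under eq_bigr => y1 _ do rewrite scale3.
rewrite sink3.
transitivity (\sum_r u r * m x.1 r z.1 * \sum_p sg (deg p && deg y2) * mu z.2 p y2 *
   \sum_e u e * m e p x.2).
  apply: eq_bigr => r _; rewrite big_distrr exchange_big; apply: eq_bigr => p _.
  rewrite /= !big_distrr; apply: eq_bigr => e _ /=.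
  transitivity (sg ((deg r && deg p) (+) (deg r && deg e) (+) (deg p && deg y2)) *
    mu z.2 p y2 * m e p x.2 * m x.1 r z.1 * \sum_y1 u y1 * mu y1 r e).
    by rewrite big_distrr; apply: eq_bigr => y1 _ /=; ring.
  rewrite unital; zc r; zc e; by bs; ring.
under eq_bigr => r _ do under eq_bigr => p _ do rewrite munitl.
under eq_bigr => r _ do under eq_bigr => p _ do rewrite mulrC.
under eq_bigr => r _ do rewrite sum_kd.
rewrite -big_distrl /= munitr; ring.
Qed.

Lemma mPE P v w z : mP P v w z = \sum_y w y * \sum_x v x * P x y z.
Proof.
rewrite /mP exchange_big; apply: eq_bigr => y _; rewrite big_distrr.
by apply: eq_bigr => x _ /=; ring.
Qed.

Lemma sumJ_kd1 (f : I -> C) g (F : JJ -> C) :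
  \sum_(y : JJ) kd y.1 g * f y.2 * F y = \sum_b f b * F (g, b).
Proof.
rewrite sumJ /=; under eq_bigr => a _ do under eq_bigr => b _ do rewrite -!mulrA.
under eq_bigr => a _ do rewrite -big_distrr /=.
by rewrite sum_kd.
Qed.

Lemma sumJ_kd2 (f : I -> C) g (F : JJ -> C) :
  \sum_(y : JJ) f y.1 * kd y.2 g * F y = \sum_a f a * F (a, g).
Proof.
rewrite sumJ /=; apply: eq_bigr => a _.
under eq_bigr => b _ do rewrite [f a * _]mulrC -!mulrA.
by rewrite sum_kd.
Qed.

Lemma sumJ_one (f g : I -> C) (F : JJ -> C) :
  \sum_(y : JJ) f y.1 * g y.2 * F y = \sum_a f a * \sum_b g b * F (a, b).
Proof.
rewrite sumJ /=; apply: eq_bigr => a _; rewrite big_distrr.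
by apply: eq_bigr => b _ /=; ring.
Qed.

Lemma gPH : graded (@PH _ A).
Proof.
move=> x y z /sum_neq0 [p /sum_neq0 [e /sum_neq0 [r H]]].
have H4 := mul_neq0r H; have H3 := mul_neq0r (mul_neq0l H).
have H2 := mul_neq0r (mul_neq0l (mul_neq0l H)).
have H1 := mul_neq0r (mul_neq0l (mul_neq0l (mul_neq0l H))).
rewrite /degJ (hm_deg H2) (hmu_deg H4) (hmu_deg H3) (hm_deg H1).
by case: (deg x.1); case: (deg p); case: (deg e); case: (deg r); case: (deg y.2).
Qed.

Lemma gPHt : graded (@PHt _ A).
Proof.
move=> x y z /sum_neq0 [r /sum_neq0 [e /sum_neq0 [p H]]].
have H4 := mul_neq0r H; have H3 := mul_neq0r (mul_neq0l H).
have H2 := mul_neq0r (mul_neq0l (mul_neq0l H)).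
have H1 := mul_neq0r (mul_neq0l (mul_neq0l (mul_neq0l H))).
rewrite /degJ (hm_deg H4) (hm_deg H3) (hmu_deg H2) (hmu_deg H1).
by case: (deg x.1); case: (deg p); case: (deg e); case: (deg r); case: (deg y.2).
Qed.

Lemma h_oneH : homog false (@oneH _ A).
Proof.
move=> k H; rewrite /degJ (heps_deg (mul_neq0l H)) (hu_deg (mul_neq0r H)) //.
Qed.
Lemma h_oneHt : homog false (@oneHt _ A).
Proof.
move=> k H; rewrite /degJ (hu_deg (mul_neq0l H)) (heps_deg (mul_neq0r H)) //.
Qed.
Lemma kd_eq a b : kd a b != 0 -> a = b.
Proof. by move=> H; apply/eqP; move: H; rewrite /kdelta; case: (a == b) => //; rewrite eqxx. Qed.
Lemma h_eH_lo al : hom (deg al) (@eH_lo _ A al).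
Proof.
move=> k H; rewrite /degJ (heps_deg (mul_neq0l H)) (kd_eq (mul_neq0r H)) //.
Qed.
Lemma h_eH_up al : hom (deg al) (@eH_up _ A al).
Proof.
move=> k H; rewrite /degJ (hu_deg (mul_neq0r H)) (kd_eq (mul_neq0l H)) addbF //.
Qed.
Lemma h_eHt_lo al : hom (deg al) (@eHt_lo _ A al).
Proof.
move=> k H; rewrite /degJ (heps_deg (mul_neq0r H)) (kd_eq (mul_neq0l H)) addbF //.
Qed.
Lemma h_eHt_up al : hom (deg al) (@eHt_up _ A al).
Proof.
move=> k H; rewrite /degJ (hu_deg (mul_neq0l H)) (kd_eq (mul_neq0r H)) //.
Qed.

Lemma H_up_up al ga : mP (@PH _ A) (eH_up al) (eH_up ga) =
  fun z => sg (deg al && deg ga) * mu z.1 al ga * u z.2.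
Proof.
apply: functional_extensionality => z; rewrite mPE /eH_up.
under eq_bigr => y _ do rewrite sumJ_kd1 PH_b.
rewrite sumJ_kd1 /=.
under eq_bigr => b _ do rewrite mulrCA.
rewrite sum_kd andbC; ring.
Qed.

Lemma sink2 (F : I -> I -> I -> C) :
  \sum_x \sum_a \sum_b F x a b = \sum_a \sum_b \sum_x F x a b.
Proof. rewrite exchange_big; apply: eq_bigr => a _; by rewrite exchange_big. Qed.

Lemma scale2 (F : I -> I -> C) c :
  c * (\sum_a \sum_b F a b) = \sum_a \sum_b c * F a b.
Proof. rewrite big_distrr; apply: eq_bigr => a _; by rewrite big_distrr. Qed.

Lemma mPE2 P v w z : mP P v w z = \sum_x v x * \sum_y w y * P x y z.
Proof.
rewrite /mulP; apply: eq_bigr => x _; rewrite big_distrr.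
by apply: eq_bigr => y _ /=; ring.
Qed.

Lemma sumJ_one' (f g : I -> C) (F : JJ -> C) :
  \sum_(y : JJ) f y.1 * g y.2 * F y = \sum_b g b * \sum_a f a * F (a, b).
Proof.
rewrite sumJ exchange_big /=; apply: eq_bigr => b _.
by rewrite big_distrr; apply: eq_bigr => a _ /=; ring.
Qed.

Lemma sumJ_delta (v : JJ -> C) z :
  \sum_(y : JJ) v y * (kd y.2 z.2 * kd z.1 y.1) = v z.
Proof.
rewrite sumJ /=; transitivity (\sum_a kd a z.1 * \sum_b kd b z.2 * v (a, b)).
  apply: eq_bigr => a _; rewrite big_distrr; apply: eq_bigr => b _ /=.
  rewrite [kd z.1 a]kdC; ring.
under eq_bigr => a _ do rewrite sum_kd.
by rewrite sum_kd; case: z.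
Qed.

Lemma H_up_lo al ga : mP (@PH _ A) (eH_up al) (eH_lo ga) =
  fun z => kd z.1 al * kd z.2 ga.
Proof.
apply: functional_extensionality => z; rewrite mPE /eH_up /eH_lo.
under eq_bigr => y _ do rewrite sumJ_kd1 PH_b.
rewrite sumJ_kd2 /=.
transitivity (kd ga z.2 * \sum_a eps a * mu z.1 al a).
  rewrite big_distrr; apply: eq_bigr => a _ /=; ze a; by bs; ring.
by rewrite counitr [kd ga _]kdC; ring.
Qed.

Lemma H_lo_up be ga : mP (@PH _ A) (eH_lo be) (eH_up ga) =
  fun z => \sum_e sg ((deg be && deg ga) (+) (deg z.1 && deg e) (+) deg e) *
     m z.1 e ga * mu be e z.2.
Proof.
apply: functional_extensionality => z; rewrite mPE /eH_lo /eH_up.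
under eq_bigr => y _ do rewrite sumJ_kd2 PH_a.
rewrite sumJ_kd1 /=.
transitivity (\sum_e \sum_r sg ((deg be && deg ga) (+) (deg z.1 && deg e) (+) deg e) *
   m z.1 e ga * mu be e r * \sum_b u b * m r b z.2).
  under eq_bigr => b _ do rewrite scale2.
  rewrite sink2; apply: eq_bigr => e _; apply: eq_bigr => r _.
  by rewrite big_distrr; apply: eq_bigr => b _ /=; ring.
under [LHS]eq_bigr => e _ do under eq_bigr => r _ do rewrite munitr.
by apply: eq_bigr => e _; rewrite sum_kdm.
Qed.

Lemma H_lo_lo be de : mP (@PH _ A) (eH_lo be) (eH_lo de) =
  fun z => eps z.1 * m be de z.2.
Proof.
apply: functional_extensionality => z; rewrite mPE /eH_lo.
under eq_bigr => y _ do rewrite sumJ_kd2 PH_a.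
rewrite sumJ_kd2 /=.
transitivity (\sum_e \sum_r sg ((deg z.1 && deg e) (+) deg e) *
   m r de z.2 * mu be e r * \sum_a m z.1 e a * eps a).
  under eq_bigr => b _ do rewrite scale2.
  rewrite sink2; apply: eq_bigr => e _; apply: eq_bigr => r _.
  rewrite big_distrr; apply: eq_bigr => a _ /=; ze a; by bs; ring.
under [LHS]eq_bigr => e _ do under eq_bigr => r _ do rewrite cmult.
transitivity (eps z.1 * \sum_r m r de z.2 * \sum_e eps e * mu be e r).
  rewrite big_distrr exchange_big; apply: eq_bigr => r _ /=.
  rewrite !big_distrr; apply: eq_bigr => e _ /=; ze e; by bs; ring.
congr (_ * _); under eq_bigr => r _ do rewrite counitl mulrC.
by rewrite sum_kdr.
Qed.

Lemma H_one_l v : mP (@PH _ A) (@oneH _ A) v = v.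
Proof.
apply: functional_extensionality => z; rewrite mPE /oneH.
under eq_bigr => y _ do rewrite sumJ_one.
under eq_bigr => y _ do under eq_bigr => a _ do rewrite PH_b.
transitivity (\sum_y v y * (kd y.2 z.2 * \sum_a eps a * mu z.1 a y.1)).
  apply: eq_bigr => y _; congr (_ * _); rewrite big_distrr; apply: eq_bigr => a _ /=.
  ze a; by bs; ring.
under eq_bigr => y _ do rewrite counitl.
exact: sumJ_delta.
Qed.

Lemma H_one_r v : mP (@PH _ A) v (@oneH _ A) = v.
Proof.
apply: functional_extensionality => z; rewrite mPE2 /oneH.
under eq_bigr => x _ do rewrite sumJ_one'.
under eq_bigr => x _ do under eq_bigr => b _ do rewrite PH_c.
transitivity (\sum_x v x * (kd x.2 z.2 * kd z.1 x.1)).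
  apply: eq_bigr => x _; congr (_ * _).
  under eq_bigr => b _ do rewrite mulrCA.
  rewrite -big_distrr /= munitr kdC; ring.
exact: sumJ_delta.
Qed.

Lemma Ht_lo_lo al ga : mP (@PHt _ A) (eHt_lo al) (eHt_lo ga) =
  fun z => m al ga z.1 * eps z.2.
Proof.
apply: functional_extensionality => z; rewrite mPE /eHt_lo.
under eq_bigr => y _ do rewrite sumJ_kd1 PHt_b.
rewrite sumJ_kd1 /=.
under eq_bigr => b _ do rewrite mulrCA.
by rewrite sum_kdr; ring.
Qed.

Lemma Ht_lo_up al de : mP (@PHt _ A) (eHt_lo al) (eHt_up de) =
  fun z => kd z.1 al * kd z.2 de.
Proof.
apply: functional_extensionality => z; rewrite mPE /eHt_lo /eHt_up.
under eq_bigr => y _ do rewrite sumJ_kd1 PHt_b.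
rewrite sumJ_kd2 /=.
under eq_bigr => a _ do rewrite mulrCA.
by rewrite -big_distrr /= munitr kdC [kd al _]kdC mulrC.
Qed.

Lemma Ht_up_up be de : mP (@PHt _ A) (eHt_up be) (eHt_up de) =
  fun z => u z.1 * (sg (deg be && deg de) * mu z.2 be de).
Proof.
apply: functional_extensionality => z; rewrite mPE /eHt_up.
under eq_bigr => y _ do rewrite sumJ_kd2 PHt_a.
rewrite sumJ_kd2 /=.
transitivity (\sum_e \sum_p sg ((deg z.1 && deg p) (+) (deg z.1 && deg e) (+) (deg p && deg de)) *
   mu z.2 p de * m e p be * \sum_a u a * mu a z.1 e).
  under eq_bigr => b _ do rewrite scale2.
  rewrite sink2; apply: eq_bigr => e _; apply: eq_bigr => p _.
  by rewrite big_distrr; apply: eq_bigr => a _ /=; ring.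
under [LHS]eq_bigr => e _ do under eq_bigr => p _ do rewrite unital.
transitivity (u z.1 * \sum_p sg (deg p && deg de) * mu z.2 p de * \sum_e u e * m e p be).
  rewrite big_distrr exchange_big; apply: eq_bigr => p _ /=.
  rewrite !big_distrr; apply: eq_bigr => e _ /=; zc (z.1); zc e; by bs; ring.
congr (_ * _); under eq_bigr => p _ do rewrite munitl.
by rewrite sum_kdm.
Qed.

Lemma Ht_up_lo be ga : mP (@PHt _ A) (eHt_up be) (eHt_lo ga) =
  fun z => \sum_e sg ((deg z.1 && deg z.2) (+) (deg z.1 && deg e)) *
     mu ga z.1 e * m e z.2 be.
Proof.
apply: functional_extensionality => z; rewrite mPE /eHt_up /eHt_lo.
under eq_bigr => y _ do rewrite sumJ_kd2 PHt_a.
rewrite sumJ_kd1 /=.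
transitivity (\sum_e \sum_p sg ((deg z.1 && deg p) (+) (deg z.1 && deg e)) *
   mu ga z.1 e * m e p be * \sum_b eps b * mu z.2 p b).
  under eq_bigr => b _ do rewrite scale2.
  rewrite sink2; apply: eq_bigr => e _; apply: eq_bigr => p _.
  rewrite big_distrr; apply: eq_bigr => b _ /=; ze b; by bs; ring.
under [LHS]eq_bigr => e _ do under eq_bigr => p _ do rewrite counitr.
apply: eq_bigr => e _.
under eq_bigr => p _ do rewrite mulrC.
by rewrite sum_kdr.
Qed.

Lemma Ht_one_l v : mP (@PHt _ A) (@oneHt _ A) v = v.
Proof.
apply: functional_extensionality => z; rewrite mPE /oneHt.
under eq_bigr => y _ do rewrite sumJ_one.
under eq_bigr => y _ do under eq_bigr => a _ do rewrite PHt_b.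
transitivity (\sum_y v y * (kd y.2 z.2 * kd z.1 y.1)).
  apply: eq_bigr => y _; congr (_ * _).
  under eq_bigr => a _ do rewrite mulrCA.
  by rewrite -big_distrr /= munitl [kd z.2 _]kdC [kd y.1 _]kdC.
exact: sumJ_delta.
Qed.

Lemma Ht_one_r v : mP (@PHt _ A) v (@oneHt _ A) = v.
Proof.
apply: functional_extensionality => z; rewrite mPE2 /oneHt.
under eq_bigr => x _ do rewrite sumJ_one'.
under eq_bigr => x _ do under eq_bigr => b _ do rewrite PHt_c.
transitivity (\sum_x v x * (kd x.2 z.2 * kd z.1 x.1)).
  apply: eq_bigr => x _; congr (_ * _).
  transitivity (kd x.1 z.1 * \sum_b eps b * mu z.2 x.2 b).
    rewrite big_distrr; apply: eq_bigr => b _ /=; ze b; by bs; ring.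
  by rewrite counitr [kd x.1 _]kdC [kd z.2 _]kdC mulrC.
exact: sumJ_delta.
Qed.

Local Notation fm := (@fam C A).

Lemma leg12_fam (o : JJ -> C) (c : I -> C) (F G : I -> JJ -> C) X :
  (forall k1 k2, X k1 k2 = \sum_al c al * F al k1 * G al k2) ->
  leg12 o X = fam (A:=A) c F G (fun _ => o).
Proof.
move=> HX; do 3! (apply: functional_extensionality => ?).
rewrite /leg12 /fam /t3 HX big_distrl; apply: eq_bigr => al _ /=; ring.
Qed.
Lemma leg13_fam (o : JJ -> C) (c : I -> C) (F G : I -> JJ -> C) X :
  (forall k1 k2, X k1 k2 = \sum_al c al * F al k1 * G al k2) ->
  leg13 o X = fam (A:=A) c F (fun _ => o) G.
Proof.
move=> HX; do 3! (apply: functional_extensionality => ?).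
rewrite /leg13 /fam /t3 HX big_distrl; apply: eq_bigr => al _ /=; ring.
Qed.
Lemma leg23_fam (o : JJ -> C) (c : I -> C) (F G : I -> JJ -> C) X :
  (forall k1 k2, X k1 k2 = \sum_al c al * F al k1 * G al k2) ->
  leg23 o X = fam (A:=A) c (fun _ => o) F G.
Proof.
move=> HX; do 3! (apply: functional_extensionality => ?).
rewrite /leg23 /fam /t3 HX big_distrr; apply: eq_bigr => al _ /=; ring.
Qed.

Lemma dS k1 k2 : @S_H _ A k1 k2 = \sum_al sg (deg al) * eH_lo al k1 * eH_up al k2.
Proof. by []. Qed.
Lemma dSt k1 k2 : @S_t _ A k1 k2 = \sum_al (fun _ => 1) al * eHt_lo al k1 * eHt_up al k2.
Proof. by apply: eq_bigr => al _; rewrite mul1r. Qed.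
Lemma dSp a b' k1 k2 : @S_p _ A a b' k1 k2 =
  \sum_al sg (odd (a + b' + 1) && deg al) * eHt_lo al k1 * eH_up al k2.
Proof. by []. Qed.
Lemma dSpp a b' k1 k2 : @S_pp _ A a b' k1 k2 =
  \sum_al sg (odd (a + b') && deg al) * eH_lo al k1 * eHt_up al k2.
Proof. by []. Qed.

Lemma sum_pair (K1 K2 : finType) (F : K1 * K2 -> C) :
  \sum_(p : K1 * K2) F p = \sum_a \sum_b F (a, b).
Proof. by rewrite pair_bigA; apply: eq_bigr => -[]. Qed.

Local Notation PH := (@PH _ A).
Local Notation PHt := (@PHt _ A).
Local Notation oH := (@oneH _ A).
Local Notation oHt := (@oneHt _ A).

Lemma sum_only (F : I -> C) a0 : (forall a, a != a0 -> F a = 0) -> \sum_a F a = F a0.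
Proof. by move=> H; rewrite (bigD1 a0) //= big1 ?addr0 // => a /H. Qed.

Ltac kill := let a := fresh in let Hne := fresh in let H1 := fresh in let H2 := fresh in
  move=> a Hne; have H1 := negPf Hne; rewrite eq_sym in Hne; have H2 := negPf Hne;
  rewrite /kdelta ?H1 ?H2 /= ?mulr0n; do ?[apply: big1 => ? _]; rewrite !(mul0r, mulr0).

Ltac cm t := let E := fresh in
  have [->|/hm_deg E] := eqVneq t 0; [by rewrite !(mul0r, mulr0) | rewrite ?E].
Ltac cmu t := let E := fresh in
  have [->|/hmu_deg E] := eqVneq t 0; [by rewrite !(mul0r, mulr0) | rewrite ?E].
Ltac fin := rewrite ?addn1 ?oddS /sgn;
  repeat match goal with |- context [odd ?x] => case: (odd x) end; repeat match goal with |- context [deg ?x] => case: (deg x) end;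
  rewrite /=; ring.

Lemma id7 : mul3 PHt PHt PHt (leg12 oHt (@S_t _ A)) (leg23 oHt (@S_t _ A))
  = mul3 PHt PHt PHt (mul3 PHt PHt PHt (leg23 oHt (@S_t _ A)) (leg13 oHt (@S_t _ A)))
      (leg12 oHt (@S_t _ A)).
Proof.
rewrite (leg12_fam _ dSt) (leg23_fam _ dSt) (leg13_fam _ dSt).
rewrite (mul3_fam _ _ _ _ _ _ _ h_eHt_up (fun _ => h_oneHt) (fun _ => h_oneHt) h_eHt_lo).
rewrite (mul3_fam _ _ _ _ _ _ _ h_eHt_lo h_eHt_up h_eHt_lo (fun _ => h_oneHt)).
rewrite (mul3_fam _ _ _ _ _ _ _ (fun p => homog_mulP gPHt (@h_eHt_lo p.1) h_oneHt)
   (fun p => homog_mulP gPHt (@h_eHt_up p.1) (@h_eHt_up p.2)) h_eHt_lo h_eHt_up).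
apply: functional_extensionality => -[a1 a2].
apply: functional_extensionality => -[s t].
apply: functional_extensionality => -[r1 r2].
rewrite /fam /t3 !sum_pair /=.
under eq_bigr => a _ do under eq_bigr => b _ do
  rewrite Ht_one_r Ht_one_l Ht_up_lo.
under [RHS]eq_bigr => a _ do under eq_bigr => b _ do under eq_bigr => c _ do
  rewrite Ht_one_r Ht_one_l Ht_one_r Ht_up_up Ht_lo_lo Ht_lo_up.
rewrite /eHt_lo /eHt_up /=.
rewrite (sum_only (a0 := a1)); last by kill.
rewrite (sum_only (a0 := r2)); last by kill.
rewrite [RHS](sum_only (a0 := s)); last by kill.
rewrite [RHS]exchange_big [RHS](sum_only (a0 := t)); last by kill.
rewrite /kdelta !eqxx /=.
do ?[rewrite big_distrr /= | rewrite big_distrl /=].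
apply: eq_bigr => e _; fin.
Qed.

Ltac sp := rewrite ?Ht_one_r ?Ht_one_l ?H_one_r ?H_one_l ?H_up_up ?H_up_lo ?H_lo_up
  ?H_lo_lo ?Ht_lo_lo ?Ht_up_up ?Ht_lo_up ?Ht_up_lo.
Ltac spL2 := under [LHS]eq_bigr => ? _ do under eq_bigr => ? _ do sp.
Ltac spR2 := under [RHS]eq_bigr => ? _ do under eq_bigr => ? _ do sp.
Ltac spL3 := under [LHS]eq_bigr => ? _ do under eq_bigr => ? _ do under eq_bigr => ? _ do sp.
Ltac spR3 := under [RHS]eq_bigr => ? _ do under eq_bigr => ? _ do under eq_bigr => ? _ do sp.
Ltac fx := apply: functional_extensionality => -[a1 a2];
  apply: functional_extensionality => -[s t];
  apply: functional_extensionality => -[r1 r2];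
  rewrite /fam /t3 !sum_pair /=.

Variables (a b' : nat).
Local Notation Sp := (@S_p _ A a b').
Local Notation Spp := (@S_pp _ A a b').
Local Notation S := (@S_H _ A).
Local Notation St := (@S_t _ A).

Lemma id1 : mul3 PHt PH PH (mul3 PHt PH PH (leg12 oH Sp) (leg13 oH Sp)) (leg23 oHt S)
        = mul3 PHt PH PH (leg23 oHt S) (leg12 oH Sp).
Proof.
rewrite (leg12_fam _ (dSp a b')) (leg13_fam _ (dSp a b')) (leg23_fam _ dS).
rewrite (mul3_fam _ _ _ _ _ _ _ h_eH_up (fun _ => h_oneH) h_eHt_lo (fun _ => h_oneH)).
rewrite (mul3_fam _ _ _ _ _ _ _ (fun p => homog_mulP gPH (@h_eH_up p.1) h_oneH)
   (fun p => homog_mulP gPH h_oneH (@h_eH_up p.2)) (fun _ => h_oneHt) h_eH_lo).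
rewrite (mul3_fam _ _ _ _ _ _ _ h_eH_lo h_eH_up h_eHt_lo h_eH_up).
fx. spL3. spR2.
rewrite /eHt_lo /eHt_up /eH_lo /eH_up /=.
rewrite (sum_only (a0:=s)); last by kill.
rewrite exchange_big (sum_only (a0:=t)); last by kill.
rewrite [RHS](sum_only (a0:=r1)); last by kill.
rewrite [RHS](sum_only (a0:=a1)); last by kill.
rewrite /kdelta !eqxx /=.
do ?[rewrite big_distrr /= | rewrite big_distrl /=].
apply: eq_bigr => e _.
cm (m s e a1). cmu (mu r1 e t).
fin.
Qed.

Lemma id2 : mul3 PHt PHt PH (leg12 oH St) (leg23 oHt Sp)
        = mul3 PHt PHt PH (mul3 PHt PHt PH (leg23 oHt Sp) (leg13 oHt Sp)) (leg12 oH St).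
Proof.
rewrite (leg12_fam _ dSt) (leg13_fam _ (dSp a b')) (leg23_fam _ (dSp a b')).
rewrite (mul3_fam _ _ _ _ _ _ _ h_eHt_up (fun _ => h_oneH) (fun _ => h_oneHt) h_eHt_lo).
rewrite (mul3_fam _ _ _ _ _ _ _ h_eHt_lo h_eH_up h_eHt_lo (fun _ => h_oneHt)).
rewrite (mul3_fam _ _ _ _ _ _ _ (fun p => homog_mulP gPHt (@h_eHt_lo p.1) h_oneHt)
   (fun p => homog_mulP gPH (@h_eH_up p.1) (@h_eH_up p.2)) h_eHt_lo h_eHt_up).
fx. spL2. spR3.
rewrite /eHt_lo /eHt_up /eH_lo /eH_up /=.
rewrite (sum_only (a0:=a1)); last by kill.
rewrite (sum_only (a0:=r1)); last by kill.
rewrite [RHS](sum_only (a0:=s)); last by kill.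
rewrite [RHS]exchange_big [RHS](sum_only (a0:=t)); last by kill.
rewrite /kdelta !eqxx /=.
do ?[rewrite big_distrr /= | rewrite big_distrl /=].
apply: eq_bigr => e _.
cm (m e t a1). cmu (mu r1 s e).
fin.
Qed.

Lemma id3 : mul3 PH PH PHt (mul3 PH PH PHt (leg12 oHt S) (leg13 oH Spp)) (leg23 oH Spp)
        = mul3 PH PH PHt (leg23 oH Spp) (leg12 oHt S).
Proof.
rewrite (leg12_fam _ dS) (leg13_fam _ (dSpp a b')) (leg23_fam _ (dSpp a b')).
rewrite (mul3_fam _ _ _ _ _ _ _ h_eH_up (fun _ => h_oneHt) h_eH_lo (fun _ => h_oneH)).
rewrite (mul3_fam _ _ _ _ _ _ _ (fun p => homog_mulP gPH (@h_eH_up p.1) h_oneH)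
   (fun p => homog_mulP gPHt h_oneHt (@h_eHt_up p.2)) (fun _ => h_oneH) h_eH_lo).
rewrite (mul3_fam _ _ _ _ _ _ _ h_eH_lo h_eHt_up h_eH_lo h_eH_up).
fx. spL3. spR2.
rewrite /eHt_lo /eHt_up /eH_lo /eH_up /=.
rewrite (sum_only (a0:=s)); last by kill.
rewrite exchange_big (sum_only (a0:=t)); last by kill.
rewrite [RHS](sum_only (a0:=r2)); last by kill.
rewrite [RHS](sum_only (a0:=a2)); last by kill.
rewrite /kdelta !eqxx /=.
do ?[rewrite big_distrr /= | rewrite big_distrl /=].
apply: eq_bigr => e _.
cm (m s e a2). cmu (mu r2 e t).
fin.
Qed.

Lemma id4 : mul3 PH PHt PHt (leg12 oHt Spp) (leg23 oH St)
        = mul3 PH PHt PHt (mul3 PH PHt PHt (leg23 oH St) (leg13 oHt Spp)) (leg12 oHt Spp).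
Proof.
rewrite (leg12_fam _ (dSpp a b')) (leg13_fam _ (dSpp a b')) (leg23_fam _ dSt).
rewrite (mul3_fam _ _ _ _ _ _ _ h_eHt_up (fun _ => h_oneHt) (fun _ => h_oneH) h_eHt_lo).
rewrite (mul3_fam _ _ _ _ _ _ _ h_eHt_lo h_eHt_up h_eH_lo (fun _ => h_oneHt)).
rewrite (mul3_fam _ _ _ _ _ _ _ (fun p => homog_mulP gPHt (@h_eHt_lo p.1) h_oneHt)
   (fun p => homog_mulP gPHt (@h_eHt_up p.1) (@h_eHt_up p.2)) h_eH_lo h_eHt_up).
fx. spL2. spR3.
rewrite /eHt_lo /eHt_up /eH_lo /eH_up /=.
rewrite (sum_only (a0:=a2)); last by kill.
rewrite (sum_only (a0:=r2)); last by kill.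
rewrite [RHS](sum_only (a0:=s)); last by kill.
rewrite [RHS]exchange_big [RHS](sum_only (a0:=t)); last by kill.
rewrite /kdelta !eqxx /=.
do ?[rewrite big_distrr /= | rewrite big_distrl /=].
apply: eq_bigr => e _.
cm (m e t a2). cmu (mu r2 s e).
fin.
Qed.

Lemma id5 : mul3 PHt PH PHt (mul3 PHt PH PHt (leg12 oHt Sp) (leg13 oH St)) (leg23 oHt Spp)
        = mul3 PHt PH PHt (leg23 oHt Spp) (leg12 oHt Sp).
Proof.
rewrite (leg12_fam _ (dSp a b')) (leg13_fam _ dSt) (leg23_fam _ (dSpp a b')).
rewrite (mul3_fam _ _ _ _ _ _ _ h_eH_up (fun _ => h_oneHt) h_eHt_lo (fun _ => h_oneH)).
rewrite (mul3_fam _ _ _ _ _ _ _ (fun p => homog_mulP gPH (@h_eH_up p.1) h_oneH)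
   (fun p => homog_mulP gPHt h_oneHt (@h_eHt_up p.2)) (fun _ => h_oneHt) h_eH_lo).
rewrite (mul3_fam _ _ _ _ _ _ _ h_eH_lo h_eHt_up h_eHt_lo h_eH_up).
fx. spL3. spR2.
rewrite /eHt_lo /eHt_up /eH_lo /eH_up /=.
rewrite (sum_only (a0:=s)); last by kill.
rewrite exchange_big (sum_only (a0:=t)); last by kill.
rewrite [RHS](sum_only (a0:=r2)); last by kill.
rewrite [RHS](sum_only (a0:=a1)); last by kill.
rewrite /kdelta !eqxx /=.
do ?[rewrite big_distrr /= | rewrite big_distrl /=].
apply: eq_bigr => e _.
cm (m s e a1). cmu (mu r2 e t).
fin.
Qed.

Lemma id6 : mul3 PH PHt PH (leg12 oH Spp) (leg23 oH Sp)
        = mul3 PH PHt PH (mul3 PH PHt PH (leg23 oH Sp) (leg13 oHt S)) (leg12 oH Spp).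
Proof.
rewrite (leg12_fam _ (dSpp a b')) (leg13_fam _ dS) (leg23_fam _ (dSp a b')).
rewrite (mul3_fam _ _ _ _ _ _ _ h_eHt_up (fun _ => h_oneH) (fun _ => h_oneH) h_eHt_lo).
rewrite (mul3_fam _ _ _ _ _ _ _ h_eHt_lo h_eH_up h_eH_lo (fun _ => h_oneHt)).
rewrite (mul3_fam _ _ _ _ _ _ _ (fun p => homog_mulP gPHt (@h_eHt_lo p.1) h_oneHt)
   (fun p => homog_mulP gPH (@h_eH_up p.1) (@h_eH_up p.2)) h_eH_lo h_eHt_up).
fx. spL2. spR3.
rewrite /eHt_lo /eHt_up /eH_lo /eH_up /=.
rewrite (sum_only (a0:=a2)); last by kill.
rewrite (sum_only (a0:=r1)); last by kill.
rewrite [RHS](sum_only (a0:=s)); last by kill.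
rewrite [RHS]exchange_big [RHS](sum_only (a0:=t)); last by kill.
rewrite /kdelta !eqxx /=.
do ?[rewrite big_distrr /= | rewrite big_distrl /=].
apply: eq_bigr => e _.
cm (m e t a2). cmu (mu r1 s e).
fin.
Qed.

End Hopf.

Theorem mainTheorem4 (R : realType) (A : hopf_data R[i]) (a b' : nat) :
  is_graded_hopf A ->
  let PH := @PH _ A in let PHt := @PHt _ A in
  let oH := @oneH _ A in let oHt := @oneHt _ A in
  let S := @S_H _ A in let St := @S_t _ A in
  let Sp := @S_p _ A a b' in let Spp := @S_pp _ A a b' in
  [/\ (* positions H(A_dual), H(A), H(A) *)
      mul3 PHt PH PH (mul3 PHt PH PH (leg12 oH Sp) (leg13 oH Sp)) (leg23 oHt S)
        = mul3 PHt PH PH (leg23 oHt S) (leg12 oH Sp),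
      (* positions H(A_dual), H(A_dual), H(A) *)
      mul3 PHt PHt PH (leg12 oH St) (leg23 oHt Sp)
        = mul3 PHt PHt PH (mul3 PHt PHt PH (leg23 oHt Sp) (leg13 oHt Sp)) (leg12 oH St),
      (* positions H(A), H(A), H(A_dual) *)
      mul3 PH PH PHt (mul3 PH PH PHt (leg12 oHt S) (leg13 oH Spp)) (leg23 oH Spp)
        = mul3 PH PH PHt (leg23 oH Spp) (leg12 oHt S),
      (* positions H(A), H(A_dual), H(A_dual) *)
      mul3 PH PHt PHt (leg12 oHt Spp) (leg23 oH St)
        = mul3 PH PHt PHt (mul3 PH PHt PHt (leg23 oH St) (leg13 oHt Spp)) (leg12 oHt Spp) &
      [/\ (* positions H(A_dual), H(A), H(A_dual) *)
          mul3 PHt PH PHt (mul3 PHt PH PHt (leg12 oHt Sp) (leg13 oH St)) (leg23 oHt Spp)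
            = mul3 PHt PH PHt (leg23 oHt Spp) (leg12 oHt Sp),
          (* positions H(A), H(A_dual), H(A) *)
          mul3 PH PHt PH (leg12 oH Spp) (leg23 oH Sp)
            = mul3 PH PHt PH (mul3 PH PHt PH (leg23 oH Sp) (leg13 oHt S)) (leg12 oH Spp) &
          (* Yang-Baxter for St, positions H(A_dual), H(A_dual), H(A_dual) *)
          mul3 PHt PHt PHt (leg12 oHt St) (leg23 oHt St)
            = mul3 PHt PHt PHt (mul3 PHt PHt PHt (leg23 oHt St) (leg13 oHt St)) (leg12 oHt St)]].
Proof.
move=> [[hm hmu hu heps] _ munit _ [counit _ unital [cmult ueps] _]].
have munitl := fun b c => (munit b c).1.
have munitr := fun b c => (munit b c).2.
have counitl := fun b c => (counit b c).1.
have counitr := fun b c => (counit b c).2.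
cbv zeta.
split; [ by apply: id1 | by apply: id2 | by apply: id3 | by apply: id4 | ].
split; [ by apply: id5 | by apply: id6 | by apply: id7 ].
Qed.
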